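(* Let $(X,\mathbb{A},d)$ be a complete $C^*$-algebra valued metric space, where $\mathbb{A}$ is a unital $C^*$-algebra. Let $T,S:X\to X$ be mappings such that $$d(T^n x,S^n y)\preceq (q(x,y)^* )^n\,\delta(x,y)\,q(x,y)^n\quad\text{for all }x,y\in X,\ n\in\mathbb{N},$$ where $q:X\times X\to\mathbb{A}$ satisfies $0\le\|q(x,y)\|<1$ for all $x,y\in X$ and $\delta:X\times X\to\mathbb{A}_+$ is a mapping. Then $T$ and $S$ are both orbitally continuous on $X$ if and only if $T$ and $S$ have a unique common fixed point in $X$.
   Context: $\mathbb{A}$ denotes a unital $C^*$-algebra with unit $I$ and zero $\theta$. An element $a\in\mathbb{A}$ is positive, written $a\succeq\theta$, if $a^*=a$ and its spectrum is contained in $[0,\infty)$; $\mathbb{A}_+$ is the set of positive elements, and $a\succeq b$ means $a-b\succeq\theta$. A $C^*$-algebra valued metric space $(X,\mathbb{A},d)$ is a nonempty set $X$ with $d:X\times X\to\mathbb{A}$ such that for all $x,y,z\in X$: $d(x,y)\succeq\theta$, with $d(x,y)=\theta$ iff $x=y$; $d(x,y)=d(y,x)$; $d(x,y)\preceq d(x,z)+d(z,y)$. A sequence $\{x_n\}$ converges to $x$ if $\|d(x_n,x)\|\to0$, and is Cauchy if $\|d(x_n,x_m)\|\to0$ as $n,m\to\infty$; the space is complete if every Cauchy sequence converges to a point of $X$. A self-map $T$ of $X$ is orbitally continuous at $u\in X$ if for every $x\in X$ and every increasing sequence of positive integers $\{n_i\}$, $\|d(T^{n_i}x,u)\|\to0$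 implies $\|d(T^{n_i+1}x,Tu)\|\to0$ as $i\to\infty$; $T$ is orbitally continuous on $X$ if it is orbitally continuous at every $u\in X$. *)

(* Defs.v *)
From Stdlib Require Import Reals.
Open Scope R_scope.

Record Cplx := mkC { cre : R; cim : R }.
Definition C0 : Cplx := mkC 0 0.
Definition C1 : Cplx := mkC 1 0.
Definition Cadd (z w : Cplx) : Cplx := mkC (cre z + cre w) (cim z + cim w).
Definition Cmul (z w : Cplx) : Cplx :=
  mkC (cre z * cre w - cim z * cim w) (cre z * cim w + cim z * cre w).
Definition Cconj (z : Cplx) : Cplx := mkC (cre z) (- cim z).
Definition Cabs (z : Cplx) : R := sqrt (cre z * cre z + cim z * cim z).

Definition invertible_in {T : Type} (one : T) (mul : T -> T -> T) (b : T) : Prop :=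
  exists c, mul b c = one /\ mul c b = one.

Definition positive_in {T : Type} (one : T) (add : T -> T -> T) (opp : T -> T)
  (mul : T -> T -> T) (smul : Cplx -> T -> T) (star : T -> T) (a : T) : Prop :=
  star a = a /\
  forall lam : Cplx,
    ~ invertible_in one mul (add a (opp (smul lam one))) ->
    cim lam = 0 /\ 0 <= cre lam.

Record UnitalCStarAlgebra := {
  car :> Type;
  zero : car;
  one : car;
  add : car -> car -> car;
  opp : car -> car;
  mul : car -> car -> car;
  smul : Cplx -> car -> car;
  star : car -> car;
  norm : car -> R;
  add_assoc : forall a b c, add a (add b c) = add (add a b) c;
  add_comm : forall a b, add a b = add b a;
  add_zero : forall a, add a zero = a;
  add_opp : forall a, add a (opp a) = zero;
  smul_assoc : forall z w a, smul z (smul w a) = smul (Cmul z w) a;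
  smul_one : forall a, smul C1 a = a;
  smul_add : forall z a b, smul z (add a b) = add (smul z a) (smul z b);
  smul_addC : forall z w a, smul (Cadd z w) a = add (smul z a) (smul w a);
  mul_assoc : forall a b c, mul a (mul b c) = mul (mul a b) c;
  mul_one_l : forall a, mul one a = a;
  mul_one_r : forall a, mul a one = a;
  mul_add_l : forall a b c, mul (add a b) c = add (mul a c) (mul b c);
  mul_add_r : forall a b c, mul a (add b c) = add (mul a b) (mul a c);
  mul_smul_l : forall z a b, mul (smul z a) b = smul z (mul a b);
  mul_smul_r : forall z a b, mul a (smul z b) = smul z (mul a b);
  star_star : forall a, star (star a) = a;
  star_add : forall a b, star (add a b) = add (star a) (star b);
  star_smul : forall z a, star (smul z a) = smul (Cconj z) (star a);
  star_mul : forall a b, star (mul a b) = mul (star b) (star a);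
  norm_nonneg : forall a, 0 <= norm a;
  norm_eq0 : forall a, norm a = 0 -> a = zero;
  norm_smul : forall z a, norm (smul z a) = Cabs z * norm a;
  norm_triangle : forall a b, norm (add a b) <= norm a + norm b;
  norm_submult : forall a b, norm (mul a b) <= norm a * norm b;
  norm_cstar : forall a, norm (mul (star a) a) = norm a * norm a;
  norm_complete : forall u : nat -> car,
    (forall eps, eps > 0 -> exists N, forall n m, (n >= N)%nat -> (m >= N)%nat ->
        norm (add (u n) (opp (u m))) < eps) ->
    exists l, forall eps, eps > 0 -> exists N, forall n, (n >= N)%nat ->
        norm (add (u n) (opp l)) < eps;
  (* Standard THEOREMS of C*-algebra theory (consequences of the axioms above,
     recorded as fields because no spectral theory library is available;
     they do not restrict the class of structures). *)
  pos_add_thm : forall a b,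
    positive_in one add opp mul smul star a ->
    positive_in one add opp mul smul star b ->
    positive_in one add opp mul smul star (add a b);
  pos_conj_thm : forall a c,
    positive_in one add opp mul smul star a ->
    positive_in one add opp mul smul star (mul (mul (star c) a) c);
  pos_norm_mono_thm : forall a b,
    positive_in one add opp mul smul star a ->
    positive_in one add opp mul smul star (add b (opp a)) ->
    norm a <= norm b
}.

Arguments zero {_}. Arguments one {_}. Arguments add {_}. Arguments opp {_}.
Arguments mul {_}. Arguments smul {_}. Arguments star {_}. Arguments norm {_}.

Definition cpositive {A : UnitalCStarAlgebra} (a : A) : Prop :=
  positive_in one add opp mul smul star a.

Definition cle {A : UnitalCStarAlgebra} (a b : A) : Prop :=
  cpositive (add b (opp a)).

Fixpoint apow {A : UnitalCStarAlgebra} (n : nat) (a : A) : A :=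
  match n with O => one | S k => mul a (apow k a) end.

Definition is_cstar_metric (A : UnitalCStarAlgebra) (X : Type) (d : X -> X -> A) : Prop :=
  inhabited X /\
  (forall x y, cpositive (d x y)) /\
  (forall x y, d x y = zero <-> x = y) /\
  (forall x y, d x y = d y x) /\
  (forall x y z, cle (d x y) (add (d x z) (d z y))).

Definition cm_converges {A : UnitalCStarAlgebra} {X : Type} (d : X -> X -> A)
  (s : nat -> X) (x : X) : Prop :=
  forall eps, eps > 0 -> exists N, forall n, (n >= N)%nat -> norm (d (s n) x) < eps.

Definition cm_cauchy {A : UnitalCStarAlgebra} {X : Type} (d : X -> X -> A)
  (s : nat -> X) : Prop :=
  forall eps, eps > 0 -> exists N, forall n m, (n >= N)%nat -> (m >= N)%nat ->
    norm (d (s n) (s m)) < eps.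

Definition cm_complete {A : UnitalCStarAlgebra} {X : Type} (d : X -> X -> A) : Prop :=
  forall s, cm_cauchy d s -> exists x, cm_converges d s x.

Definition orbitally_continuous_at {A : UnitalCStarAlgebra} {X : Type}
  (d : X -> X -> A) (T : X -> X) (u : X) : Prop :=
  forall (x : X) (ni : nat -> nat),
    (forall i, (ni i < ni (S i))%nat) ->
    cm_converges d (fun i => Nat.iter (ni i) T x) u ->
    cm_converges d (fun i => Nat.iter (S (ni i)) T x) (T u).

Definition orbitally_continuous {A : UnitalCStarAlgebra} {X : Type}
  (d : X -> X -> A) (T : X -> X) : Prop :=
  forall u, orbitally_continuous_at d T u.

(* Main.v *)
Require Import Defs.
From Stdlib Require Import Reals.
From Stdlib Require Import Lra Psatz.
Open Scope R_scope.

Lemma pow_le_one (r : R) (n : nat) : 0 <= r <= 1 -> r ^ n <= 1.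
Proof. intros H. rewrite <- (pow1 n). apply pow_incr. lra. Qed.

Lemma pow_nonneg' (r : R) (n : nat) : 0 <= r -> 0 <= r ^ n.
Proof. intros; apply pow_le; auto. Qed.

Lemma pow_anti (r : R) (N n : nat) : 0 <= r <= 1 -> (n >= N)%nat -> r ^ n <= r ^ N.
Proof.
  intros H Hn. replace n with (N + (n - N))%nat by lia. rewrite pow_add.
  pose proof (pow_le_one r (n - N) H). pose proof (pow_nonneg' r N ltac:(lra)). nra.
Qed.

Lemma geom_small (C r : R) : 0 <= C -> 0 <= r < 1 ->
  forall eps, eps > 0 -> exists N, forall n, (n >= N)%nat -> C * r ^ n < eps.
Proof.
  intros HC Hr eps He.
  destruct (pow_lt_1_zero r ltac:(rewrite Rabs_right; lra) (eps / (C + 1)))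
    as [N HN].
  { apply Rdiv_lt_0_compat; lra. }
  exists N. intros n Hn. specialize (HN n Hn).
  rewrite Rabs_right in HN by (apply Rle_ge, pow_nonneg'; lra).
  pose proof (pow_nonneg' r n ltac:(lra)).
  assert (C * r ^ n <= (C+1) * r^n) by nra.
  assert ((C+1) * r^n < (C+1) * (eps / (C+1))) by (apply Rmult_lt_compat_l; lra).
  replace ((C+1) * (eps / (C+1))) with eps in * by (field; lra). lra.
Qed.

Lemma norm_star_le (A : UnitalCStarAlgebra) (a : A) : norm (star a) <= norm a.
Proof.
  pose proof (norm_cstar A (star a)) as H. rewrite star_star in H.
  pose proof (norm_submult A a (star a)).
  pose proof (norm_nonneg A a). pose proof (norm_nonneg A (star a)). nra.
Qed.

Lemma apow_norm (A : UnitalCStarAlgebra) (a : A) (n : nat) :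
  (n >= 1)%nat -> norm (apow n a) <= norm a ^ n.
Proof.
  induction n as [|n IH]; intros Hn; [lia|].
  destruct n as [|n].
  - simpl. rewrite mul_one_r. lra.
  - change (apow (S (S n)) a) with (mul a (apow (S n) a)).
    pose proof (norm_submult A a (apow (S n) a)).
    pose proof (IH ltac:(lia)). pose proof (norm_nonneg A a).
    change (norm a ^ S (S n)) with (norm a * norm a ^ S n).
    pose proof (norm_nonneg A (apow (S n) a)).
    apply Rle_trans with (norm a * norm (apow (S n) a)); [exact H|].
    apply Rmult_le_compat_l; auto.
Qed.

Lemma norm_zero (A : UnitalCStarAlgebra) : norm (@zero A) = 0.
Proof.
  set (s := smul C0 (@one A)).
  assert (Hs : s = add s s).
  { unfold s. rewrite <- smul_addC. f_equal. unfold Cadd, C0; simpl. f_equal; ring. }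
  assert (Hz : s = zero).
  { rewrite <- (add_opp A s). rewrite Hs at 2. rewrite <- add_assoc, add_opp, add_zero.
    reflexivity. }
  rewrite <- Hz. unfold s. rewrite norm_smul. unfold Cabs, C0; simpl.
  replace (0*0+0*0) with 0 by ring. rewrite sqrt_0. ring.
Qed.


Lemma cle_norm (A : UnitalCStarAlgebra) (a b : A) :
  cpositive a -> cle a b -> norm a <= norm b.
Proof. intros Ha Hab. apply (pos_norm_mono_thm A); auto. Qed.

Lemma tri (A : UnitalCStarAlgebra) (X : Type) (d : X -> X -> A) :
  is_cstar_metric A X d -> forall x y z, norm (d x y) <= norm (d x z) + norm (d z y).
Proof.
  intros (_ & Hp & _ & _ & Ht) x y z.
  eapply Rle_trans. apply cle_norm; [apply Hp|apply Ht]. apply norm_triangle.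
Qed.

Lemma eq_of_small (A : UnitalCStarAlgebra) (X : Type) (d : X -> X -> A) :
  is_cstar_metric A X d -> forall u v,
  (forall eps, eps > 0 -> norm (d u v) < eps) -> u = v.
Proof.
  intros Hd u v H. destruct Hd as (_ & _ & He & _ & _). apply He.
  apply (norm_eq0 A). pose proof (norm_nonneg A (d u v)).
  destruct (Req_dec (norm (d u v)) 0) as [E|E]; auto.
  specialize (H (norm (d u v) / 2) ltac:(lra)). lra.
Qed.

Lemma lim_unique (A : UnitalCStarAlgebra) (X : Type) (d : X -> X -> A) :
  is_cstar_metric A X d -> forall s u v,
  cm_converges d s u -> cm_converges d s v -> u = v.
Proof.
  intros Hd s u v Hu Hv. apply (eq_of_small A X d Hd). intros eps He.
  destruct (Hu (eps/2) ltac:(lra)) as [N1 H1].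
  destruct (Hv (eps/2) ltac:(lra)) as [N2 H2].
  specialize (H1 (N1+N2)%nat ltac:(lia)). specialize (H2 (N1+N2)%nat ltac:(lia)).
  pose proof (tri A X d Hd u v (s (N1+N2)%nat)) as Ht.
  destruct Hd as (_ & _ & _ & Hs & _). rewrite (Hs u (s (N1+N2)%nat)) in Ht. lra.
Qed.

Lemma conv_sub (A : UnitalCStarAlgebra) (X : Type) (d : X -> X -> A) s u g :
  cm_converges d s u -> (forall i, (g i >= i)%nat) ->
  cm_converges d (fun i => s (g i)) u.
Proof.
  intros H Hg eps He. destruct (H eps He) as [N HN]. exists N. intros n Hn.
  apply HN. specialize (Hg n). lia.
Qed.

Lemma conv_bound (A : UnitalCStarAlgebra) (X : Type) (d : X -> X -> A) s u C r :
  0 <= C -> 0 <= r < 1 ->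
  (forall n, (n >= 1)%nat -> norm (d (s n) u) <= C * r ^ n) ->
  cm_converges d s u.
Proof.
  intros HC Hr H eps He. destruct (geom_small C r HC Hr eps He) as [N HN].
  exists (N+1)%nat. intros n Hn. specialize (H n ltac:(lia)).
  specialize (HN n ltac:(lia)). lra.
Qed.

Lemma incr_ge (ni : nat -> nat) : (forall i, (ni i < ni (S i))%nat) -> forall i, (ni i >= i)%nat.
Proof. intros H i. induction i. lia. specialize (H i). lia. Qed.

Lemma iter_fix (X : Type) (f : X -> X) u n : f u = u -> Nat.iter n f u = u.
Proof. intros H. induction n; simpl; auto. rewrite IHn; auto. Qed.

Theorem theorem3p15 (A : UnitalCStarAlgebra) (X : Type) (d : X -> X -> A)
  (Hd : is_cstar_metric A X d) (Hcomplete : cm_complete d)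
  (T S : X -> X) (q : X -> X -> A) (delta : X -> X -> A)
  (Hq : forall x y, 0 <= norm (q x y) < 1)
  (Hdelta : forall x y, cpositive (delta x y))
  (Hcontr : forall (x y : X) (n : nat), (n >= 1)%nat ->
     cle (d (Nat.iter n T x) (Nat.iter n S y))
         (mul (mul (apow n (star (q x y))) (delta x y)) (apow n (q x y)))) :
  (orbitally_continuous d T /\ orbitally_continuous d S) <->
  (exists! u : X, T u = u /\ S u = u).
Proof.
  rename S into Sm.

  assert (Hb : forall x y n, (n >= 1)%nat ->
    norm (d (Nat.iter n T x) (Nat.iter n Sm y)) <= norm (delta x y) * norm (q x y) ^ n).
  { intros x y n Hn.
    eapply Rle_trans. apply cle_norm; [apply Hd|apply Hcontr; auto].
    set (P := apow n (star (q x y))). set (Q := apow n (q x y)).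
    pose proof (norm_submult A (mul P (delta x y)) Q).
    pose proof (norm_submult A P (delta x y)).
    pose proof (apow_norm A (star (q x y)) n Hn).
    pose proof (apow_norm A (q x y) n Hn).
    pose proof (norm_star_le A (q x y)).
    pose proof (pow_incr (norm (star (q x y))) (norm (q x y)) n
                  ltac:(split; [apply norm_nonneg|auto])).
    pose proof (pow_le_one (norm (q x y)) n ltac:(specialize (Hq x y); lra)).
    pose proof (pow_nonneg' (norm (q x y)) n ltac:(apply norm_nonneg)).
    pose proof (norm_nonneg A P). pose proof (norm_nonneg A Q).
    pose proof (norm_nonneg A (delta x y)).
    pose proof (norm_nonneg A (mul P (delta x y))).
    fold P Q in H1, H2. set (r := norm (q x y) ^ n) in *.
    assert (norm P <= r) by lra.
    assert (norm (mul P (delta x y)) <= r * norm (delta x y)) by nra.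
    nra. }
  destruct Hd as (Hinh & Hpos & Heq & Hsym & Htri).
  assert (Hd' : is_cstar_metric A X d) by exact (conj Hinh (conj Hpos (conj Heq (conj Hsym Htri)))).
  split.
  - intros [OT OS]. destruct Hinh as [x0].
    set (a := fun n => Nat.iter n T x0).
    set (r1 := norm (q x0 x0)). set (r2 := norm (q (T x0) x0)).
    set (rho := Rmax r1 r2).
    set (C := norm (delta x0 x0) + norm (delta (T x0) x0)).
    assert (Hr1 := Hq x0 x0). assert (Hr2 := Hq (T x0) x0). fold r1 in Hr1. fold r2 in Hr2.
    assert (Hrho : 0 <= rho < 1).
    { unfold rho, Rmax. destruct (Rle_dec r1 r2); lra. }
    assert (HC : 0 <= C) by (unfold C; pose proof (norm_nonneg A (delta x0 x0));
        pose proof (norm_nonneg A (delta (T x0) x0)); lra).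
    assert (Hstep : forall n, (n >= 1)%nat -> norm (d (a n) (a (Datatypes.S n))) <= C * rho ^ n).
    { intros n Hn. unfold a. rewrite Nat.iter_succ_r.
      pose proof (tri A X d Hd' (Nat.iter n T x0) (Nat.iter n T (T x0)) (Nat.iter n Sm x0)).
      pose proof (Hb x0 x0 n Hn). pose proof (Hb (T x0) x0 n Hn).
      rewrite (Hsym (Nat.iter n Sm x0)) in H.
      pose proof (pow_incr r1 rho n ltac:(unfold rho; split; [lra|apply Rmax_l])).
      pose proof (pow_incr r2 rho n ltac:(unfold rho; split; [lra|apply Rmax_r])).
      pose proof (norm_nonneg A (delta x0 x0)).
      pose proof (norm_nonneg A (delta (T x0) x0)).
      fold r1 in H0. fold r2 in H1. unfold C. nra. }
    set (D := C / (1 - rho)).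
    assert (HD : 0 <= D) by (unfold D; unfold Rdiv; apply Rmult_le_pos; [lra|apply Rlt_le, Rinv_0_lt_compat; lra]).
    assert (Hfar : forall k n, (n >= 1)%nat -> norm (d (a n) (a (n + k)%nat)) <= D * rho ^ n).
    { induction k as [|k IH]; intros n Hn.
      - rewrite Nat.add_0_r. assert (d (a n) (a n) = zero) by (apply Heq; auto).
        rewrite H, norm_zero. pose proof (pow_nonneg' rho n ltac:(lra)). nra.
      - rewrite Nat.add_succ_r; change (Datatypes.S (n + k)) with (Datatypes.S n + k)%nat.
        pose proof (tri A X d Hd' (a n) (a (Datatypes.S n + k)%nat) (a (Datatypes.S n))).
        pose proof (Hstep n Hn). assert (Hn2 : (Datatypes.S n >= 1)%nat) by lia. pose proof (IH (Datatypes.S n) Hn2).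
        assert (D * rho ^ Datatypes.S n + C * rho ^ n = D * rho ^ n).
        { unfold D. simpl. field. lra. }
        lra. }
    assert (Hcau : cm_cauchy d a).
    { intros eps He. destruct (geom_small D rho HD Hrho eps He) as [N HN].
      exists (N + 1)%nat. intros n m Hn Hm.
      assert (Hmain : forall n m, (n >= N+1)%nat -> (m >= n)%nat -> norm (d (a n) (a m)) < eps).
      { intros n' m' Hn' Hm'. replace m' with (n' + (m' - n'))%nat by lia.
        pose proof (Hfar (m' - n')%nat n' ltac:(lia)).
        specialize (HN n' ltac:(lia)). lra. }
      destruct (Nat.le_gt_cases n m).
      + apply Hmain; lia.
      + rewrite Hsym. apply Hmain; lia. }
    destruct (Hcomplete a Hcau) as [u Hu].
    assert (Hshift : forall f v, cm_converges d (fun n => Nat.iter n f x0) v ->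
              cm_converges d (fun n => Nat.iter (Datatypes.S n) f x0) v).
    { intros f v H. apply (conv_sub A X d (fun n => Nat.iter n f x0) v Datatypes.S H). intros; lia. }
    assert (HTu : T u = u).
    { specialize (OT u x0 (fun i => i) ltac:(intros; cbv beta; lia) Hu). simpl in OT.
      symmetry. eapply lim_unique; [exact Hd'| |exact OT].
      apply (Hshift T u Hu). }
    assert (HSconv : cm_converges d (fun n => Nat.iter n Sm x0) u).
    { intros eps He. destruct (Hu (eps/2) ltac:(lra)) as [N1 H1].
      destruct (geom_small (norm (delta x0 x0)) r1 ltac:(apply norm_nonneg)
          Hr1 (eps/2) ltac:(lra)) as [N2 H2].
      exists (N1 + N2 + 1)%nat. intros n Hn.
      pose proof (tri A X d Hd' (Nat.iter n Sm x0) u (Nat.iter n T x0)).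
      rewrite (Hsym (Nat.iter n Sm x0) (Nat.iter n T x0)) in H.
      pose proof (Hb x0 x0 n ltac:(lia)). specialize (H1 n ltac:(lia)).
      specialize (H2 n ltac:(lia)). fold r1 in H0. unfold a in H1. lra. }
    assert (HSu : Sm u = u).
    { specialize (OS u x0 (fun i => i) ltac:(intros; cbv beta; lia) HSconv). simpl in OS.
      symmetry. eapply lim_unique; [exact Hd'| |exact OS].
      apply (Hshift Sm u HSconv). }
    exists u. split; [auto|]. intros v [HTv HSv].
    apply (eq_of_small A X d Hd'). intros eps He.
    destruct (geom_small (norm (delta u v)) (norm (q u v)) ltac:(apply norm_nonneg)
       (Hq u v) eps He) as [N HN].
    pose proof (Hb u v (N+1)%nat ltac:(lia)).
    rewrite (iter_fix X T u), (iter_fix X Sm v) in H by auto.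
    specialize (HN (N+1)%nat ltac:(lia)). lra.
  - intros [u [[HTu HSu] Huniq]].
    assert (HTc : forall x, cm_converges d (fun n => Nat.iter n T x) u).
    { intros x. apply (conv_bound A X d _ u (norm (delta x u)) (norm (q x u)));
        [apply norm_nonneg|apply Hq|].
      intros n Hn. pose proof (Hb x u n Hn). rewrite (iter_fix X Sm u) in H; auto. }
    assert (HSc : forall x, cm_converges d (fun n => Nat.iter n Sm x) u).
    { intros x. apply (conv_bound A X d _ u (norm (delta u x)) (norm (q u x)));
        [apply norm_nonneg|apply Hq|].
      intros n Hn. pose proof (Hb u x n Hn). rewrite (iter_fix X T u) in H; auto.
      rewrite Hsym; auto. }
    split.
    + intros w x ni Hni Hw.
      assert (w = u).
      { eapply lim_unique; [exact Hd'|exact Hw|].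
        apply (conv_sub A X d (fun n => Nat.iter n T x) u ni (HTc x) (incr_ge ni Hni)). }
      subst w. rewrite HTu.
      apply (conv_sub A X d (fun n => Nat.iter n T x) u (fun i => Datatypes.S (ni i)) (HTc x)).
      intros i; pose proof (incr_ge ni Hni i); lia.
    + intros w x ni Hni Hw.
      assert (w = u).
      { eapply lim_unique; [exact Hd'|exact Hw|].
        apply (conv_sub A X d (fun n => Nat.iter n Sm x) u ni (HSc x) (incr_ge ni Hni)). }
      subst w. rewrite HSu.
      apply (conv_sub A X d (fun n => Nat.iter n Sm x) u (fun i => Datatypes.S (ni i)) (HSc x)).
      intros i; pose proof (incr_ge ni Hni i); lia.
Qed.
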